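(* Let $(S,\mathfrak n,k)$ be a Noetherian local ring, $I$ an $\mathfrak n$-primary ideal, and $R=S/I$ with maximal ideal $\mathfrak m=\mathfrak n/I$. Then $$s(R)\le \ell_S(R)-\sum_{i=0}^{v_S(R)-1}h_S(i)+v_S(R)-1.$$ Moreover, if $I$ is not a power of $\mathfrak n$, the following are equivalent: 1) equality holds above; 2) $\mu(\mathfrak m^{v_S(R)})=1$; 3) the Hilbert function of $R$ satisfies $h_R(i)=h_S(i)$ for $0\le i\le v_S(R)-1$, $h_R(i)=1$ for $v_S(R)\le i\le s(R)$, and $h_R(i)=0$ for $i>s(R)$.
   Context: For an Artinian local ring $(R,\mathfrak m)$, $s(R)$ is the largest $s$ with $\mathfrak m^s\neq0$. For a local ring $(A,\mathfrak a)$, $h_A(i)=\ell_A(\mathfrak a^i/\mathfrak a^{i+1})$. $v_S(R)=\max\{n\mid I\subseteq\mathfrak n^n\}$. $\mu(M)$ is the minimal number of generators of $M$. *)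

(* Defs.v *)
From HB Require Import structures.
From mathcomp Require Import all_boot all_order all_algebra.
From Stdlib Require Import ClassicalEpsilon.
Set Implicit Arguments. Unset Strict Implicit. Unset Printing Implicit Defensive.
Import Order.TTheory GRing.Theory Num.Theory.
Local Open Scope ring_scope.

Definition natmax (P : nat -> Prop) : nat :=
  match excluded_middle_informative
          (exists l, P l /\ forall k, P k -> (k <= l)%N) with
  | left H => proj1_sig (constructive_indefinite_description _ H)
  | right _ => 0%N
  end.

Definition natmin (P : nat -> Prop) : nat :=
  match excluded_middle_informative
          (exists l, P l /\ forall k, P k -> (l <= k)%N) with
  | left H => proj1_sig (constructive_indefinite_description _ H)
  | right _ => 0%N
  end.

Definition is_ideal (A : comNzRingType) (J : A -> Prop) : Prop :=
  J 0 /\ (forall x y, J x -> J y -> J (x + y)) /\ (forall a x, J x -> J (a * x)).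

Definition idealpow (A : comNzRingType) (J : A -> Prop) (i : nat) (x : A) : Prop :=
  exists (m : nat) (a : 'I_m -> A) (y : 'I_m -> 'I_i -> A),
    (forall j l, J (y j l)) /\ x = \sum_(j < m) a j * \prod_(l < i) y j l.

Definition is_local (A : comNzRingType) (n : A -> Prop) : Prop :=
  is_ideal n /\ ~ n 1 /\
  (forall J, is_ideal J -> ~ J 1 -> forall x, J x -> n x).

Definition noetherian (A : comNzRingType) : Prop :=
  forall J : A -> Prop, is_ideal J ->
    exists (k : nat) (g : 'I_k -> A),
      forall x, J x <-> exists a : 'I_k -> A, x = \sum_(i < k) a i * g i.

Definition primary_to (A : comNzRingType) (I n : A -> Prop) : Prop :=
  is_ideal I /\ ~ I 1 /\
  (forall x y, I (x * y) -> ~ I x -> exists k, I (y ^+ k)) /\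
  (forall x, n x <-> exists k, I (x ^+ k)).

Definition mu (A : comNzRingType) (N : A -> Prop) : nat :=
  natmin (fun k => exists g : 'I_k -> A,
             forall x, N x <-> exists a : 'I_k -> A, x = \sum_(i < k) a i * g i).

Definition is_submod (B : comNzRingType) (M : zmodType) (act : B -> M -> M)
  (N : M -> Prop) : Prop :=
  N 0 /\ (forall x y, N x -> N y -> N (x + y)) /\ (forall x, N x -> N (- x)) /\
  (forall b x, N x -> N (act b x)).

Definition subchain (B : comNzRingType) (M : zmodType) (act : B -> M -> M)
  (K J : M -> Prop) (c : nat -> M -> Prop) (m : nat) : Prop :=
  (forall x, c 0%N x <-> K x) /\ (forall x, c m x <-> J x) /\
  (forall i, (i <= m)%N -> is_submod act (c i)) /\
  (forall i, (i < m)%N ->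
     (forall x, c i x -> c i.+1 x) /\ exists x, c i.+1 x /\ ~ c i x).

(* length of the module J/K (K <= J submodules): supremum of lengths of
   strict chains of submodules from K to J (0 if not finite). *)
Definition mlength (B : comNzRingType) (M : zmodType) (act : B -> M -> M)
  (J K : M -> Prop) : nat :=
  natmax (fun m => exists c, subchain act K J c m).

Definition hilb (A : comNzRingType) (J : A -> Prop) (i : nat) : nat :=
  mlength (fun a x : A => a * x) (idealpow J i) (idealpow J i.+1).

Definition socdeg (A : comNzRingType) (J : A -> Prop) : nat :=
  natmax (fun s => exists x, idealpow J s x /\ x <> 0).

Definition vS (A : comNzRingType) (n I : A -> Prop) : nat :=
  natmax (fun v => forall x, I x -> idealpow n v x).

(* Main.v *)
Require Import Defs.
From HB Require Import structures.
From mathcomp Require Import all_boot all_order all_algebra.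
From Stdlib Require Import ClassicalEpsilon FunctionalExtensionality PropExtensionality Classical.
From mathcomp Require Import zify ring.
Import Order.TTheory GRing.Theory Num.Theory.
Set Implicit Arguments. Unset Strict Implicit. Unset Printing Implicit Defensive.
Local Open Scope ring_scope.

Lemma natmax_spec (P : nat -> Prop) :
  (exists l, P l /\ forall k, P k -> (k <= l)%N) ->
  P (natmax P) /\ forall k, P k -> (k <= natmax P)%N.
Proof.
rewrite /natmax; case: excluded_middle_informative => // H _.
by case: (constructive_indefinite_description _ H) => /= l [].
Qed.

Lemma natmax_ex (P : nat -> Prop) k0 B :
  P k0 -> (forall k, P k -> (k <= B)%N) ->
  exists l, P l /\ forall k, P k -> (k <= l)%N.
Proof.
elim: B k0 => [|B IH] k0 Pk0 HB.
  exists k0; split => // k Pk; have := HB _ Pk; have := HB _ Pk0.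
  by rewrite !leqn0 => /eqP -> /eqP ->.
case: (classic (P B.+1)) => [PB|nPB]; first by exists B.+1.
apply: (IH k0 Pk0) => k Pk; have := HB _ Pk; rewrite leq_eqVlt ltnS => /orP [/eqP Ek|//].
by move: nPB; rewrite -Ek.
Qed.

Lemma natmax_eq (P : nat -> Prop) l :
  P l -> (forall k, P k -> (k <= l)%N) -> natmax P = l.
Proof.
move=> Pl Hl; have [H1 H2] := natmax_spec (ex_intro _ l (conj Pl Hl)).
by apply/eqP; rewrite eqn_leq Hl // H2.
Qed.

Lemma natmax_ext (P Q : nat -> Prop) : (forall l, P l <-> Q l) -> natmax P = natmax Q.
Proof.
move=> H; have -> // : P = Q.
by apply: functional_extensionality => l; apply: propositional_extensionality.
Qed.

Lemma natmin_spec (P : nat -> Prop) :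
  (exists l, P l /\ forall k, P k -> (l <= k)%N) ->
  P (natmin P) /\ forall k, P k -> (natmin P <= k)%N.
Proof.
rewrite /natmin; case: excluded_middle_informative => // H _.
by case: (constructive_indefinite_description _ H) => /= l [].
Qed.

Lemma natmin_ex (P : nat -> Prop) k : P k -> exists l, P l /\ forall j, P j -> (l <= j)%N.
Proof.
elim: k {-2}k (leqnn k) => [|k IH] j.
  by rewrite leqn0 => /eqP -> P0; exists 0%N.
move=> Hj Pj; case: (classic (exists i, P i /\ (i < j)%N)) => [[i [Pi lt]]|N].
  by apply: (IH i) => //; rewrite -ltnS (leq_trans lt).
exists j; split => // i Pi; rewrite leqNgt; apply/negP => lt; apply: N; by exists i.
Qed.

Lemma natmin_eq (P : nat -> Prop) l :
  P l -> (forall k, P k -> (l <= k)%N) -> natmin P = l.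
Proof.
move=> Pl Hl; have [H1 H2] := natmin_spec (ex_intro _ l (conj Pl Hl)).
by apply/eqP; rewrite eqn_leq Hl // H2.
Qed.

Definition sb (P : Prop) : nat := if excluded_middle_informative P then 1%N else 0%N.
Lemma sbT (P : Prop) : P -> sb P = 1%N.
Proof. by rewrite /sb; case: excluded_middle_informative. Qed.
Lemma sbF (P : Prop) : ~ P -> sb P = 0%N.
Proof. by rewrite /sb; case: excluded_middle_informative. Qed.
Lemma sb_le1 P : (sb P <= 1)%N.
Proof. by rewrite /sb; case: excluded_middle_informative. Qed.


Definition psub (T : Type) (X Y : T -> Prop) := forall x, X x -> Y x.
Definition peqv (T : Type) (X Y : T -> Prop) := forall x, X x <-> Y x.

Section Chains.
Variables (S : comNzRingType) (M : zmodType) (act : S -> M -> M).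
Hypothesis actD : forall a x y, act a (x + y) = act a x + act a y.
Hypothesis actDl : forall a b x, act (a + b) x = act a x + act b x.
Hypothesis actM : forall a b x, act (a * b) x = act a (act b x).
Hypothesis act1 : forall x, act 1 x = x.

Lemma act0l x : act 0 x = 0.
Proof. have := actDl 0 0 x; rewrite addr0 => h; apply: (@addrI _ (act 0 x)); by rewrite -h addr0. Qed.
Lemma act0r a : act a 0 = 0.
Proof. have := actD a 0 0; rewrite addr0 => h; apply: (@addrI _ (act a 0)); by rewrite -h addr0. Qed.
Lemma actNl a x : act (- a) x = - act a x.
Proof. by apply/eqP; rewrite -subr_eq0 opprK -actDl addNr act0l. Qed.
Lemma actNr a x : act a (- x) = - act a x.
Proof. by apply/eqP; rewrite -subr_eq0 opprK -actD addNr act0r. Qed.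
Lemma actBr a x y : act a (x - y) = act a x - act a y.
Proof. by rewrite actD actNr. Qed.

Lemma act_sum a r (F : nat -> M) : act a (\sum_(j < r) F j) = \sum_(j < r) act a (F j).
Proof.
elim: r => [|r IH]; first by rewrite !big_ord0 act0r.
by rewrite !big_ord_recr /= actD IH.
Qed.

Fixpoint nstrict (c : nat -> M -> Prop) (m : nat) : nat :=
  match m with
  | 0 => 0%N
  | m'.+1 => (nstrict c m' + sb (exists x, c m'.+1 x /\ ~ c m' x))%N
  end.

Definition goodchain (A B : M -> Prop) (c : nat -> M -> Prop) m :=
  (forall i, (i <= m)%N -> is_submod act (c i) /\ psub A (c i) /\ psub (c i) B) /\
  (forall i, (i < m)%N -> psub (c i) (c i.+1)).

Definition bnd (A B : M -> Prop) p := forall c m, goodchain A B c m -> (nstrict c m <= p)%N.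

Lemma nstrict_le3 c c1 c2 m :
  (forall i, (i < m)%N -> (exists x, c i.+1 x /\ ~ c i x) ->
     (exists x, c1 i.+1 x /\ ~ c1 i x) \/ (exists x, c2 i.+1 x /\ ~ c2 i x)) ->
  (nstrict c m <= nstrict c1 m + nstrict c2 m)%N.
Proof.
elim: m => [|m IH] H //=.
have {}IH := IH (fun i lt => H i (ltnW lt)).
rewrite addnACA leq_add //.
case: (classic (exists x, c m.+1 x /\ ~ c m x)) => [st|nst]; last by rewrite sbF.
rewrite sbT //; case: (H m (ltnSn m) st) => [h|h]; first by rewrite sbT.
by rewrite (sbT h) addn1.
Qed.

Definition capm (c : nat -> M -> Prop) (B : M -> Prop) i x := c i x /\ B x.
Definition addm (c : nat -> M -> Prop) (B : M -> Prop) i x :=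
  exists y b, c i y /\ B b /\ x = y + b.

Lemma submod_cap X Y : is_submod act X -> is_submod act Y -> is_submod act (fun x => X x /\ Y x).
Proof.
move=> [X0 [XD [XN XA]]] [Y0 [YD [YN YA]]]; split; first by [].
split; first by move=> x y [? ?] [? ?]; split; auto.
by split; move=> *; split; intuition.
Qed.

Lemma submod_add X Y : is_submod act X -> is_submod act Y ->
  is_submod act (fun x => exists y b, X y /\ Y b /\ x = y + b).
Proof.
move=> [X0 [XD [XN XA]]] [Y0 [YD [YN YA]]]; split; first by exists 0, 0; rewrite addr0.
split; first by move=> x y [y1 [b1 [? [? ->]]]] [y2 [b2 [? [? ->]]]];
  exists (y1 + y2), (b1 + b2); split; [auto|split;[auto|]]; rewrite addrACA.
split; first by move=> x [y1 [b1 [? [? ->]]]]; exists (- y1), (- b1); rewrite opprD; auto.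
by move=> a x [y1 [b1 [? [? ->]]]]; exists (act a y1), (act a b1); rewrite actD; auto.
Qed.

Lemma split_chain A B C c m :
  is_submod act B -> psub A B -> psub B C -> is_submod act C ->
  goodchain A C c m ->
  [/\ goodchain A B (capm c B) m, goodchain B C (addm c B) m,
      (nstrict c m <= nstrict (capm c B) m + nstrict (addm c B) m)%N,
      peqv (capm c B 0) (fun x => c 0%N x /\ B x) & peqv (addm c B m) (fun x => exists y b, c m y /\ B b /\ x = y + b)].
Proof.
move=> sB AB BC sC [Hc Hm]; split => //.
- split=> [i le|i lt x [cx Bx]]; last by split => //; apply: (Hm i lt).
  have [si [Ai iC]] := Hc i le; split; first exact: submod_cap.
  by split => [x Ax|x []] //; split; auto.
- split=> [i le|i lt x [y [b [cy [Bb ->]]]]]; last by exists y, b; split => //; apply: (Hm i lt).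
  have [si [Ai iC]] := Hc i le; split; first exact: submod_add.
  split; first by move=> x Bx; exists 0, x; rewrite add0r; split => //; case: si.
  move=> x [y [b [cy [Bb ->]]]]; case: sC => _ [CD _]; apply: CD; auto.
- apply: nstrict_le3 => i lt [x [cx ncx]].
  case: (classic (exists x, capm c B i.+1 x /\ ~ capm c B i x)) => [h|h]; [by left|right].
  exists x; split; first by exists x, 0; rewrite addr0; split => //; split => //; case: sB.
  move=> [y [b [cy [Bb E]]]]; apply: ncx.
  have [si _] := Hc i (ltnW lt); have [si1 _] := Hc i.+1 lt.
  have cb : c i.+1 b.
    have -> : b = x - y by rewrite E addrC addKr.
    case: si1 => _ [D1 [N1 _]]; apply: D1 => //; apply: N1; exact: (Hm i lt).
  have : capm c B i b.
    by apply: NNPP => nb; apply: h; exists b; split.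
  case=> cib _; rewrite E; case: si => _ [D _]; exact: D.
Qed.

Lemma combine A B C p q :
  is_submod act B -> psub A B -> psub B C -> is_submod act C ->
  bnd A B p -> bnd B C q -> bnd A C (p + q).
Proof.
move=> sB AB BC sC HAB HBC c m gc.
have [g1 g2 le _ _] := split_chain sB AB BC sC gc.
by apply: (leq_trans le); apply: leq_add; [apply: HAB|apply: HBC].
Qed.

Lemma bnd_ext A B A' B' p : peqv A A' -> peqv B B' -> bnd A B p -> bnd A' B' p.
Proof.
move=> EA EB H c m [Hc Hm]; apply: H; split => // i le.
have [s [a b]] := Hc i le; split => //; split => x; [move/EA; exact: a|by move/b/EB].
Qed.

Lemma bnd0 A B : psub B A -> bnd A B 0.
Proof.
move=> BA c m [Hc Hm]; elim: m Hc Hm => [|m IH] Hc Hm //=.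
rewrite sbF ?addn0; first by apply: IH => i le; [apply: Hc; apply: leqW|move=> lt; apply: Hm; apply: ltnW].
move=> [x [cx ncx]]; apply: ncx; have [_ [A1 B1]] := Hc m.+1 (leqnn _).
have [_ [A0 _]] := Hc m (leqnSn _); exact/A0/BA/B1.
Qed.

Variable n : S -> Prop.
Hypothesis nloc : forall s, ~ n s -> exists t, t * s = 1.

Lemma two_elem B g : is_submod act B -> (forall s, n s -> B (act s g)) ->
  bnd B (fun x => exists b a, B b /\ x = b + act a g) 1.
Proof.
move=> sB Hg.
set B' := fun x => _.
have key : forall X, is_submod act X -> psub B X -> psub X B' -> psub X B \/ psub B' X.
  move=> X sX BX XB'; case: (classic (psub X B)) => [h|h]; [by left|right].
  have [x [Xx nBx]] : exists x, X x /\ ~ B x.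
    by apply: NNPP => N; apply: h => x Xx; apply: NNPP => nb; apply: N; exists x.
  have [b [a [Bb E]]] := XB' x Xx.
  have na : ~ n a by move=> na; apply: nBx; rewrite E; case: sB => _ [D _]; apply: D; auto.
  have [t ta] := nloc na.
  have Xg : X g.
    have <- : act t (x - b) = g by rewrite E addrC addKr -actM ta act1.
    case: sX => _ [D [N A]]; apply: A; apply: D => //; apply: N; exact: BX.
  move=> y [b' [a' [Bb' ->]]]; case: sX => _ [D [N A]]; apply: D; [exact: BX|exact: A].
move=> c m [Hc Hm].
suff : nstrict c m = 0%N \/ (nstrict c m = 1%N /\ psub B' (c m)) by case=> [->|[-> _]].
elim: m Hc Hm => [|m IH] Hc Hm; first by left.
have {IH} := IH (fun i le => Hc i (leqW le)) (fun i lt => Hm i (ltnW lt)).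
have [s1 [B1 B1']] := Hc m.+1 (leqnn _).
case: (classic (exists x, c m.+1 x /\ ~ c m x)) => [st|nst]; last first.
  rewrite /= sbF // addn0 => -[->|[-> H]]; [by left|right; split => //].
  by move=> x /H; apply: Hm.
rewrite /= sbT //; case => [->|[_ H]]; last first.
  by exfalso; case: st => x [c1 nc]; apply: nc; apply/H/B1'.
right; split => //; case: (key _ s1 B1 B1') => // h.
case: st => x [c1 nc]; exfalso; apply: nc.
by have [_ [A0 _]] := Hc m (leqnSn _); apply/A0/h.
Qed.

Definition span (B : M -> Prop) (g : nat -> M) r x :=
  exists b (a : nat -> S), B b /\ x = b + \sum_(j < r) act (a j) (g j).

Lemma span_submod B g r : is_submod act B -> is_submod act (span B g r).
Proof.
move=> [B0 [BD [BN BA]]]; split.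
  by exists 0, (fun _ => 0); split => //; rewrite add0r big1 // => j _; rewrite act0l.
split.
  move=> x y [b [a [Bb ->]]] [b' [a' [Bb' ->]]]; exists (b + b'), (fun j => a j + a' j).
  split; first by auto.
  by rewrite addrACA -big_split /=; congr (_ + _); apply: eq_bigr => j _; rewrite actDl.
split.
  move=> x [b [a [Bb ->]]]; exists (- b), (fun j => - a j); split; first by auto.
  by rewrite opprD -sumrN; congr (_ + _); apply: eq_bigr => j _; rewrite actNl.
move=> s x [b [a [Bb ->]]]; exists (act s b), (fun j => s * a j); split; first by auto.
by rewrite actD (act_sum _ _ (fun j => act (a j) (g j))); congr (_ + _); apply: eq_bigr => j _; rewrite actM.
Qed.

Lemma span_bnd B g r : is_submod act B -> (forall j s, n s -> B (act s (g j))) ->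
  bnd B (span B g r) r.
Proof.
move=> sB Hg; elim: r => [|r IH].
  apply: bnd0 => x [b [a [Bb ->]]]; by rewrite big_ord0 addr0.
have sBr := span_submod g r sB.
have BBr : psub B (span B g r).
  by move=> x Bx; exists x, (fun _ => 0); split => //; rewrite big1 ?addr0 // => j _; rewrite act0l.
have e : peqv (fun x => exists b a, span B g r b /\ x = b + act a (g r)) (span B g r.+1).
  move=> x; split.
    move=> [b [a [[b0 [a0 [Bb0 ->]]] ->]]].
    exists b0, (fun j => if j == r then a else a0 j); split => //.
    rewrite big_ord_recr /= eqxx -addrA; congr (_ + (_ + _)); apply: eq_bigr => j _.
    by rewrite ifN // neq_ltn ltn_ord.
  move=> [b [a [Bb ->]]]; exists (b + \sum_(j < r) act (a j) (g j)), (a r).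
  split; [by exists b, a|by rewrite big_ord_recr /= addrA].
suff : bnd B (span B g r.+1) (r + 1) by rewrite addn1.
apply: (combine sBr BBr) => //.
- by move=> x Hx; apply/e; exists x, 0; rewrite act0l addr0; split.
- exact: span_submod.
- apply: bnd_ext (two_elem _ _) => //; first by move=> x; split.
  by move=> s ns; apply: BBr; apply: Hg.
Qed.

End Chains.


Section Len.
Variables (S : comNzRingType) (M : zmodType) (act : S -> M -> M).
Hypothesis actD : forall a x y, act a (x + y) = act a x + act a y.
Hypothesis actDl : forall a b x, act (a + b) x = act a x + act b x.
Hypothesis actM : forall a b x, act (a * b) x = act a (act b x).
Hypothesis act1 : forall x, act 1 x = x.

Lemma subchain_ext K J K' J' d m : peqv K K' -> peqv J J' ->
  subchain act K J d m -> subchain act K' J' d m.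
Proof.
move=> EK EJ [H0 [Hm H]]; split; first by move=> x; rewrite H0.
by split => // x; rewrite Hm.
Qed.

Lemma subchain_mono K J c m : subchain act K J c m ->
  forall i j, (i <= j <= m)%N -> psub (c i) (c j).
Proof.
move=> [_ [_ [_ H]]] i j /andP [ij jm]; elim: j ij jm => [|j IH] ij jm.
  by move: ij; rewrite leqn0 => /eqP -> .
move: ij; rewrite leq_eqVlt => /orP [/eqP -> //|ij] x cx.
by apply: (proj1 (H j jm)); apply: IH => //; apply: ltnW.
Qed.

Lemma subchain_good K J c m : subchain act K J c m ->
  goodchain act K J c m /\ nstrict c m = m.
Proof.
move=> sc; have mono := subchain_mono sc; case: sc => [H0 [Hm [Hs Hst]]]; split.
  split => [i le|i lt]; last exact: (proj1 (Hst i lt)).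
  split; first exact: Hs.
  split => x cx; first by apply: (mono 0%N) => //; apply/H0.
  by apply/Hm; apply: (mono i) => //; rewrite le leqnn.
elim: m {H0 Hm Hs mono} Hst => [|m IH] Hst //=.
by rewrite IH ?sbT ?addn1 // => [|i lt]; [apply: (proj2 (Hst m (ltnSn m)))|apply: Hst; apply: ltnW].
Qed.

Lemma mlen_le K J p c m : bnd act K J p -> subchain act K J c m -> (m <= p)%N.
Proof. by move=> Hb sc; have [g <-] := subchain_good sc; apply: Hb. Qed.

Lemma mlen_spec K J p : is_submod act K -> is_submod act J -> psub K J -> bnd act K J p ->
  [/\ exists c, subchain act K J c (mlength act J K),
      forall c m, subchain act K J c m -> (m <= mlength act J K)%N &
      (mlength act J K <= p)%N].
Proof.
move=> sK sJ KJ Hb.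
have ex : exists l, (exists c, subchain act K J c l) /\
   forall k, (exists c, subchain act K J c k) -> (k <= l)%N.
  have [m0 c0] : exists m0, exists c, subchain act K J c m0.
    case: (classic (psub J K)) => [JK|nJK].
      exists 0%N, (fun _ => K); split=> //; split; first by move=> x; split; [apply: KJ|apply: JK].
      by split => // i; rewrite leqn0 => /eqP ->.
    exists 1%N, (fun i => if i == 0%N then K else J); split => //; split => //.
    split; first by case => [|[|i]].
    case=> // _; split => //.
    by apply: NNPP => N; apply: nJK => x Jx; apply: NNPP => nK; apply: N; exists x.
  apply: (natmax_ex c0) => k [c sc]; exact: mlen_le Hb sc.
have [[c sc] H] := natmax_spec ex.
split; [by exists c| by move=> c' m sc'; apply: H; exists c'|exact: mlen_le Hb sc].
Qed.

Lemma compress c m : (forall i, (i <= m)%N -> is_submod act (c i)) ->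
  (forall i, (i < m)%N -> psub (c i) (c i.+1)) ->
  exists d, subchain act (c 0%N) (c m) d (nstrict c m).
Proof.
elim: m => [|m IH] Hs Hm.
  exists c; split; [by move=> x; split|split; [by move=> x; split|split; [|by move=> i]]].
  by move=> i; rewrite leqn0 => /eqP ->; apply: Hs.
have [d sd] := IH (fun i le => Hs i (leqW le)) (fun i lt => Hm i (ltnW lt)).
case: (classic (exists x, c m.+1 x /\ ~ c m x)) => [st|nst]; last first.
  exists d; rewrite /= sbF // addn0; apply: subchain_ext sd => // x; split; first exact: Hm.
  by move=> cx; apply: NNPP => ncx; apply: nst; exists x.
rewrite /= sbT // addn1; set s := nstrict c m in sd *.
have [H0 [Hm' [Hs' Hst]]] := sd.
exists (fun i => if (i <= s)%N then d i else c m.+1); split => //.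
split; first by rewrite ltnn.
split; first by move=> i _; case: ifP => h; [apply: Hs'|apply: Hs (leqnn _)].
move=> i; rewrite ltnS => le; have [->|ne] := eqVneq i s.
  rewrite leqnn ltnn; split; first by move=> x /Hm'; apply: Hm.
  by case: st => x [c1 nc]; exists x; split => // /Hm'.
have lt : (i < s)%N by rewrite ltn_neqAle ne le.
by rewrite le lt; apply: Hst.
Qed.

Lemma concat K J L c d p q : subchain act K J c p -> subchain act J L d q ->
  subchain act K L (fun i => if (i <= p)%N then c i else d (i - p)%N) (p + q).
Proof.
move=> [c0 [cp [cs cst]]] [d0 [dq [ds dst]]]; split => //.
split.
  move=> x; case: ifP => [le|].
    have q0 : q = 0%N by move: le; rewrite -{2}(addn0 p) leq_add2l leqn0 => /eqP.
    by subst q; rewrite addn0 cp -d0; apply: dq.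
  by rewrite addKn dq.
split; first by move=> i le; case: ifP => [ip|pi]; [apply: cs|apply: ds; rewrite leq_subLR].
move=> i lt; case: (ltngtP i p) => [ip|pi|ep].
  by apply: cst.
  rewrite subSn; last exact: ltnW.
  by apply: dst; rewrite ltn_subLR // ltnW.
subst i; rewrite subSn // subnn; have q0 : (0 < q)%N by lia.
have [h1 [x [h2 h3]]] := dst 0%N q0.
split; first by move=> y cy; apply: h1; apply/d0; apply/cp.
by exists x; split => // cx; apply: h3; apply/d0; apply/cp.
Qed.

Lemma nstrict_le_mlen K J p c m : is_submod act K -> is_submod act J -> psub K J ->
  bnd act K J p ->
  (forall i, (i <= m)%N -> is_submod act (c i)) ->
  (forall i, (i < m)%N -> psub (c i) (c i.+1)) ->
  peqv (c 0%N) K -> peqv (c m) J -> (nstrict c m <= mlength act J K)%N.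
Proof.
move=> sK sJ KJ Hb Hs Hm E0 Em.
have [d sd] := compress Hs Hm.
have [_ H _] := mlen_spec sK sJ KJ Hb.
by apply: (H d); apply: subchain_ext sd.
Qed.

Lemma mlen_add K J L p q :
  is_submod act K -> is_submod act J -> is_submod act L -> psub K J -> psub J L ->
  bnd act K J p -> bnd act J L q ->
  mlength act L K = (mlength act J K + mlength act L J)%N.
Proof.
move=> sK sJ sL KJ JL HKJ HJL.
have KL : psub K L by move=> x /KJ /JL.
have HKL := combine actD sJ KJ JL sL HKJ HJL.
have [[c1 s1] _ _] := mlen_spec sK sJ KJ HKJ.
have [[c2 s2] _ _] := mlen_spec sJ sL JL HJL.
have [[c sc] Hmax _] := mlen_spec sK sL KL HKL.
apply/eqP; rewrite eqn_leq; apply/andP; split; last exact: (Hmax _ _ (concat s1 s2)).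
have [gc <-] := subchain_good sc.
have [g1 g2 le E1 E2] := split_chain actD sJ KJ JL sL gc.
apply: (leq_trans le); apply: leq_add.
- case: g1 => [G1 M1]; apply: (nstrict_le_mlen sK sJ KJ HKJ) => //.
  + by move=> i /G1 [].
  + move=> x; rewrite /capm; case: sc => [c0 [cm _]]; rewrite c0; split; [by case|by move=> Kx; split => //; apply: KJ].
  + move=> x; rewrite /capm; case: sc => [c0 [cm _]]; rewrite cm; split; [by case|by move=> Jx; split => //; apply: JL].
- case: g2 => [G2 M2]; apply: (nstrict_le_mlen sJ sL JL HJL) => //.
  + by move=> i /G2 [].
  + move=> x; rewrite /addm; case: sc => [c0 [cm _]]; split.
      move=> [y [b [/c0 Ky [Jb ->]]]]; case: sJ => _ [D _]; apply: D => //; exact: KJ.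
    by move=> Jx; exists 0, x; rewrite add0r; split => //; apply/c0; case: sK.
  + move=> x; rewrite /addm; case: sc => [c0 [cm _]]; split.
      move=> [y [b [/cm Ly [Jb ->]]]]; case: sL => _ [D _]; apply: D => //; exact: JL.
    by move=> Lx; exists x, 0; rewrite addr0; split; [apply/cm|split => //; case: sJ].
Qed.

End Len.


Section IP.
Variable (A : comNzRingType).

Lemma ideal_sum (K : A -> Prop) (I : Type) (r : seq I) (F : I -> A) :
  is_ideal K -> (forall i, K (F i)) -> K (\sum_(i <- r) F i).
Proof. move=> [K0 [KD _]] H; apply: big_ind => //; auto. Qed.

Lemma ideal_neg (K : A -> Prop) x : is_ideal K -> K x -> K (- x).
Proof. by move=> [_ [_ KM]] Kx; rewrite -mulN1r; apply: KM. Qed.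

Lemma ideal_sub (K : A -> Prop) x y : is_ideal K -> K x -> K y -> K (x - y).
Proof. by move=> iK Kx Ky; case: (iK) => _ [KD _]; apply: KD => //; apply: ideal_neg. Qed.

Lemma ip_ideal (J : A -> Prop) i : is_ideal (idealpow J i).
Proof.
split.
  by exists 0%N, (fun _ => 0), (fun _ _ => 0); split; [move=> [] | rewrite big_ord0].
split.
  move=> x y [m1 [a1 [y1 [H1 ->]]]] [m2 [a2 [y2 [H2 ->]]]].
  exists (m1 + m2)%N, (fun j => match split j with inl j1 => a1 j1 | inr j2 => a2 j2 end),
    (fun j => match split j with inl j1 => y1 j1 | inr j2 => y2 j2 end).
  split; first by move=> j l; case: (split j).
  rewrite big_split_ord /=; congr (_ + _); apply: eq_bigr => j _.
    by have -> : split (lshift m2 j) = inl j := unsplitK (inl _).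
  by have -> : split (rshift m1 j) = inr j := unsplitK (inr _).
move=> c x [m [a [y [H ->]]]]; exists m, (fun j => c * a j), y; split => //.
by rewrite mulr_sumr; apply: eq_bigr => j _; rewrite mulrA.
Qed.

Lemma ip0 (J : A -> Prop) x : idealpow J 0 x.
Proof.
exists 1%N, (fun _ => x), (fun _ _ => 0); split; first by move=> j [].
by rewrite big_ord1 big_ord0 mulr1.
Qed.

Lemma ip_mono (J : A -> Prop) i x : idealpow J i.+1 x -> idealpow J i x.
Proof.
move=> [m [a [y [H ->]]]].
exists m, (fun j => a j * y j ord_max), (fun j l => y j (widen_ord (leqnSn i) l)).
split => //; apply: eq_bigr => j _; rewrite big_ord_recr /= mulrAC -mulrA; congr (_ * _).
Qed.

Lemma ip_mono_le (J : A -> Prop) i j x : (i <= j)%N -> idealpow J j x -> idealpow J i x.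
Proof.
move=> le; elim: j le => [|j IH] le h.
  by move: le; rewrite leqn0 => /eqP ->.
move: le; rewrite leq_eqVlt => /orP [/eqP -> //|lt].
by apply: IH => //; apply: ip_mono.
Qed.

Lemma ip_prod (J : A -> Prop) i u w : J u -> idealpow J i w -> idealpow J i.+1 (u * w).
Proof.
move=> Ju [m [a [y [H ->]]]].
exists m, a, (fun j l => match unlift ord0 l with Some l' => y j l' | None => u end).
split; first by move=> j l; case: (unlift ord0 l).
rewrite mulr_sumr; apply: eq_bigr => j _; rewrite big_ord_recl unlift_none.
rewrite mulrCA; congr (_ * (_ * _)); apply: eq_bigr => l _; by rewrite liftK.
Qed.

Lemma ip_ind (J K : A -> Prop) i x : is_ideal K ->
  (forall u w, J u -> idealpow J i w -> K (u * w)) -> idealpow J i.+1 x -> K x.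
Proof.
move=> iK H [m [a [y [Hy ->]]]]; apply: ideal_sum => // j.
case: iK => _ [_ KM]; apply: KM; rewrite big_ord_recl; apply: H => //.
exists 1%N, (fun _ => 1), (fun _ l => y j (lift ord0 l)); split => //.
by rewrite big_ord1 mul1r.
Qed.

Lemma ip_sub (J K : A -> Prop) i : psub J K -> psub (idealpow J i) (idealpow K i).
Proof. by move=> JK x [m [a [y [H ->]]]]; exists m, a, y; split => // j l; apply: JK. Qed.

Lemma ip_in (J : A -> Prop) i x : is_ideal J -> (0 < i)%N -> idealpow J i x -> J x.
Proof.
case: i => // i iJ _ h; apply: (ip_ind iJ) h => u w Ju _.
by case: iJ => _ [_ KM]; rewrite mulrC; apply: KM.
Qed.

Lemma ip1 (J : A -> Prop) x : is_ideal J -> J x -> idealpow J 1 x.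
Proof. by move=> iJ Jx; rewrite -(mulr1 x); apply: ip_prod => //; apply: ip0. Qed.

End IP.

Section Img.
Variables (S T : comNzRingType) (pi : {rmorphism S -> T}).
Hypothesis pisurj : forall y : T, exists x, pi x = y.

Lemma ip_image (n : S -> Prop) i y :
  idealpow (fun y => exists x, n x /\ pi x = y) i y <-> exists x, idealpow n i x /\ pi x = y.
Proof.
split.
  move=> [m [a [z [H ->]]]].
  pose f := fun j l => proj1_sig (constructive_indefinite_description _ (H j l)).
  have fP : forall j l, n (f j l) /\ pi (f j l) = z j l.
    by move=> j l; rewrite /f; case: constructive_indefinite_description.
  pose b := fun j => proj1_sig (constructive_indefinite_description _ (pisurj (a j))).
  have bP : forall j, pi (b j) = a j.
    by move=> j; rewrite /b; case: constructive_indefinite_description.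
  exists (\sum_(j < m) b j * \prod_(l < i) f j l); split.
    by exists m, b, f; split => // j l; case: (fP j l).
  rewrite rmorph_sum; apply: eq_bigr => j _; rewrite rmorphM bP rmorph_prod.
  by congr (_ * _); apply: eq_bigr => l _; case: (fP j l).
move=> [x [[m [a [z [H ->]]]] <-]].
exists m, (fun j => pi (a j)), (fun j l => pi (z j l)); split.
  by move=> j l; exists (z j l).
rewrite rmorph_sum; apply: eq_bigr => j _; by rewrite rmorphM rmorph_prod.
Qed.

End Img.


Lemma pigeon e r K (f : 'I_e -> 'I_r) : (r * K < e)%N ->
  exists j, (K <= \sum_(l < e | f l == j) 1)%N.
Proof.
move=> lt; apply: NNPP => N.
have H : forall j : 'I_r, (\sum_(l < e | f l == j) 1 <= K)%N.
  move=> j; rewrite leqNgt; apply/negP => h; apply: N; exists j; exact: ltnW.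
have : (e <= r * K)%N.
  have {1}-> : e = (\sum_(l < e) 1)%N by rewrite sum1_card card_ord.
  apply: (@leq_trans (\sum_(j < r) K)); last by rewrite sum_nat_const card_ord.
  rewrite (partition_big f xpredT) //=; apply: leq_sum => j _; exact: H.
by rewrite leqNgt lt.
Qed.

Lemma nilpotent_n (S : comNzRingType) (n I : S -> Prop) r (g : 'I_r -> S) :
  is_ideal I ->
  (forall x, n x <-> exists a : 'I_r -> S, x = \sum_(i < r) a i * g i) ->
  (forall x, n x -> exists k, I (x ^+ k)) ->
  exists N, psub (idealpow n N) I.
Proof.
move=> iI Hn Hrad.
have gn : forall j, n (g j).
  move=> j; apply/Hn; exists (fun i => if i == j then 1 else 0).
  rewrite (bigD1 j) //= eqxx mul1r big1 ?addr0 // => i /negbTE ->; by rewrite mul0r.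
pose k := fun j => proj1_sig (constructive_indefinite_description _ (Hrad _ (gn j))).
have kP : forall j, I (g j ^+ k j).
  by move=> j; rewrite /k; case: constructive_indefinite_description.
pose K := (\sum_(j < r) k j)%N.
have kK : forall j, (k j <= K)%N by move=> j; rewrite /K (bigD1 j) //= leq_addr.
exists (r * K).+1 => x [m [a [y [Hy ->]]]].
have [_ [_ IM]] := iI.
apply: ideal_sum => // j; apply: (IM).
pose b := fun l => proj1_sig (constructive_indefinite_description _ (proj1 (Hn _) (Hy j l))).
have bP : forall l, y j l = \sum_(i < r) b l i * g i.
  by move=> l; rewrite /b; case: constructive_indefinite_description.
rewrite (eq_bigr _ (fun l _ => bP l)) bigA_distr_bigA /=.
apply: ideal_sum => // f; rewrite big_split /=; apply: (IM).
have [j0 cnt] := pigeon f (ltnSn (r * K)).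
rewrite (bigID (fun l => f l == j0)) /= mulrC; apply: (IM).
have -> : \prod_(l < (r * K).+1 | f l == j0) g (f l) = g j0 ^+ (\sum_(l < (r * K).+1 | f l == j0) 1)%N.
  rewrite (big_morph (fun k => g j0 ^+ k) (fun a b => exprD (g j0) a b) (expr0 _)).
  by apply: eq_bigr => l /eqP ->; rewrite expr1.
rewrite -(subnK (leq_trans (kK j0) cnt)) exprD; exact: (IM).
Qed.


Section Princ.
Variables (A : comNzRingType) (J : A -> Prop).
Hypothesis iJ : is_ideal J.
Hypothesis Jloc : forall y, ~ J y -> exists t, t * y = 1.
Hypothesis nJ1 : ~ J 1.

Lemma principal_ideal (x0 : A) : is_ideal (fun y => exists a, y = a * x0).
Proof.
split; first by exists 0; rewrite mul0r.
split; first by move=> x y [a ->] [b ->]; exists (a + b); rewrite mulrDl.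
by move=> c x [a ->]; exists (c * a); rewrite mulrA.
Qed.

Lemma principal_powers v g : (0 < v)%N ->
  (forall y, idealpow J v y <-> exists a, y = a * g) ->
  forall j, exists x, forall y, idealpow J (v + j) y <-> exists a, y = a * x.
Proof.
move=> v0 Hg; case: v v0 Hg => // v' _ Hg.
have [iJ0 [iJD iJM]] := iJ.
have [m [a [y [Hy eg]]]] : idealpow J v'.+1 g by apply/Hg; exists 1; rewrite mul1r.
have HM : forall k, exists r, \prod_(l < v'.+1) y k l = r * g.
  move=> k; apply/Hg; exists 1%N, (fun _ => 1), (fun _ => y k); split => //.
  by rewrite big_ord1 mul1r.
pose r := fun k => proj1_sig (constructive_indefinite_description _ (HM k)).
have rP : forall k, \prod_(l < v'.+1) y k l = r k * g.
  by move=> k; rewrite /r; case: constructive_indefinite_description.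
case: (classic (forall k, J (a k * r k))) => [allJ|].
  pose t := \sum_(k < m) a k * r k.
  have Jt : J t by apply: ideal_sum.
  have eg' : (1 - t) * g = 0.
    rewrite mulrBl mul1r {1}eg /t mulr_suml; apply/eqP; rewrite subr_eq0; apply/eqP.
    by apply: eq_bigr => k _; rewrite rP mulrA.
  have n1t : ~ J (1 - t).
    move=> h; apply: nJ1; have -> : (1 : A) = (1 - t) + t by rewrite subrK.
    by apply: (iJD).
  have [u hu] := Jloc n1t.
  have g0 : g = 0 by rewrite -[g]mul1r -hu -mulrA eg' mulr0.
  move=> j; exists 0 => z; split.
    move=> hz; have := ip_mono_le (leq_addr j v'.+1) hz; move/Hg => [b ->].
    by exists 0; rewrite g0 !mulr0.
  by move=> [b ->]; rewrite mulr0; case: (ip_ideal J (v'.+1 + j)).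
move=> nall; have [k nk] : exists k, ~ J (a k * r k).
  by apply: NNPP => N; apply: nall => k; apply: NNPP => h; apply: N; exists k.
have nrk : ~ J (r k) by move=> h; apply: nk; exact: (iJM).
have [u hu] := Jloc nrk.
suff Inv : forall j, exists l w, J l /\ idealpow J (v' + j) w /\
   forall z, idealpow J (v'.+1 + j) z <-> exists b, z = b * (l * w).
  by move=> j; have [l [w [_ [_ H]]]] := Inv j; exists (l * w).
elim=> [|j [l [w [Jl [Jw H]]]]].
  exists (y k ord0), (\prod_(l < v') y k (lift ord0 l)); rewrite !addn0; split => //.
  split; first by exists 1%N, (fun _ => 1), (fun _ => fun l => y k (lift ord0 l)); split => //; rewrite big_ord1 mul1r.
  have eM : y k ord0 * \prod_(l < v') y k (lift ord0 l) = r k * g by rewrite -big_ord_recl rP.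
  move=> z; rewrite eM; split.
    by move/Hg => [b ->]; exists (b * u); rewrite mulrA -(mulrA b) hu mulr1.
  by move=> [b ->]; apply/Hg; exists (b * r k); rewrite mulrA.
exists l, (l * w); split => //; split; first by rewrite addnS; apply: ip_prod.
have lw : idealpow J (v'.+1 + j) (l * w) by apply/H; exists 1; rewrite mul1r.
move=> z; rewrite addnS; split.
  apply: (ip_ind (K := fun z => exists b, z = b * (l * (l * w)))); first exact: principal_ideal.
  move=> u' z' Ju' /H [b ->].
  have : idealpow J (v'.+1 + j) (u' * w) by rewrite addSn; apply: ip_prod.
  move/H => [c hc]; exists (b * c).
  transitivity (b * (l * (u' * w))); first by ring.
  by rewrite hc; ring.
move=> [b ->]; have := ip_ideal J (v'.+1 + j).+1; case => _ [_ M]; apply: M.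
exact: ip_prod.
Qed.

End Princ.


Lemma mlength_ext (S0 : comNzRingType) (M : zmodType) (act : S0 -> M -> M) J K J' K' :
  peqv J J' -> peqv K K' -> mlength act J K = mlength act J' K'.
Proof.
move=> EJ EK; apply: natmax_ext => l; split => -[c sc]; exists c.
  exact: subchain_ext sc.
apply: subchain_ext sc => x; [by rewrite EK|by rewrite EJ].
Qed.

Lemma mlength_act (S0 S1 : comNzRingType) (M : zmodType) (act : S0 -> M -> M) (act' : S1 -> M -> M) J K :
  (forall X, is_submod act X <-> is_submod act' X) -> mlength act J K = mlength act' J K.
Proof.
move=> E; apply: natmax_ext => l; split => -[c [h1 [h2 [h3 h4]]]]; exists c;
  (split; [by []|split; [by []|split; [|by []]]]) => i le; apply/E; exact: h3.
Qed.

Lemma chain1 (S0 : comNzRingType) (M : zmodType) (act : S0 -> M -> M) K J x :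
  is_submod act K -> is_submod act J -> psub K J -> J x -> ~ K x ->
  subchain act K J (fun i => if i == 0%N then K else J) 1.
Proof.
move=> sK sJ KJ Jx nKx; split => //; split => //; split; first by case => [|[|i]].
by case=> // _; split => //; exists x.
Qed.

Lemma chain2 (S0 : comNzRingType) (M : zmodType) (act : S0 -> M -> M) K X J x y :
  is_submod act K -> is_submod act X -> is_submod act J -> psub K X -> psub X J ->
  X x -> ~ K x -> J y -> ~ X y ->
  subchain act K J (fun i => if i == 0%N then K else if i == 1%N then X else J) 2.
Proof.
move=> sK sX sJ KX XJ Xx nKx Jy nXy; split => //; split => //; split; first by case => [|[|[|i]]].
by case=> [|[|//]] _; (split; [by []|]); [exists x|exists y].
Qed.

Lemma sum_ge_nat m k c (F : nat -> nat) : (forall i, (m <= i < k)%N -> (c <= F i)%N) ->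
  ((k - m) * c <= \sum_(m <= i < k) F i)%N.
Proof.
move=> H; rewrite -sum_nat_const_nat big_nat_cond [X in (_ <= X)%N]big_nat_cond.
by apply: leq_sum => i /andP [h _]; apply: H.
Qed.

Lemma natmin_pos (P : nat -> Prop) : natmin P <> 0%N -> P (natmin P).
Proof.
rewrite /natmin; case: excluded_middle_informative => // H _.
by case: (constructive_indefinite_description _ H) => /= l [].
Qed.

Section Main.
Variables (S R : comNzRingType) (n I : S -> Prop) (pi : {rmorphism S -> R}).
Hypothesis Hnoeth : noetherian S.
Hypothesis Hloc : is_local n.
Hypothesis Hprim : primary_to I n.
Hypothesis Hsurj : forall y : R, exists x, pi x = y.
Hypothesis Hker : forall x, pi x = 0 <-> I x.

Definition img (X : S -> Prop) (y : R) := exists x, X x /\ pi x = y.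
Definition mm := img n.
Definition actR := fun (a : S) (y : R) => pi a * y.
Definition actS := fun (a x : S) => a * x.
Definition mp i := idealpow mm i.
Definition np i := idealpow n i.
Definition LL i := mlength actR (mp i) (mp i.+1).

Lemma actR_D a x y : actR a (x + y) = actR a x + actR a y. Proof. by rewrite /actR mulrDr. Qed.
Lemma actR_Dl a b x : actR (a + b) x = actR a x + actR b x. Proof. by rewrite /actR rmorphD mulrDl. Qed.
Lemma actR_M a b x : actR (a * b) x = actR a (actR b x). Proof. by rewrite /actR rmorphM mulrA. Qed.
Lemma actR_1 x : actR 1 x = x. Proof. by rewrite /actR rmorph1 mul1r. Qed.
Lemma actS_D a x y : actS a (x + y) = actS a x + actS a y. Proof. by rewrite /actS mulrDr. Qed.
Lemma actS_Dl a b x : actS (a + b) x = actS a x + actS b x. Proof. by rewrite /actS mulrDl. Qed.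
Lemma actS_M a b x : actS (a * b) x = actS a (actS b x). Proof. by rewrite /actS mulrA. Qed.
Lemma actS_1 x : actS 1 x = x. Proof. by rewrite /actS mul1r. Qed.

Lemma n_ideal : is_ideal n. Proof. by case: Hloc. Qed.
Lemma n_unit s : ~ n s -> exists t, t * s = 1.
Proof.
move=> ns; case: Hloc => _ [_ H].
pose J := fun x => exists t, x = t * s.
have iJ : is_ideal J.
  split; first by exists 0; rewrite mul0r.
  split; first by move=> x y [t ->] [t' ->]; exists (t + t'); rewrite mulrDl.
  by move=> a x [t ->]; exists (a * t); rewrite mulrA.
case: (classic (J 1)) => [[t ->]|nJ1]; first by exists t.
by exfalso; apply: ns; apply: (H J iJ nJ1); exists 1; rewrite mul1r.
Qed.

Lemma I_ideal : is_ideal I. Proof. by case: Hprim. Qed.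
Lemma I_n : psub I n.
Proof. case: Hprim => iI [nI1 _]; case: Hloc => _ [_ H]; exact: H I iI nI1. Qed.

Lemma submodR X : is_ideal X -> is_submod actR X.
Proof.
move=> iX; have [X0 [XD XM]] := iX; split => //; split => //; split.
  by move=> x; apply: ideal_neg.
by move=> a x; apply: XM.
Qed.

Lemma submodS X : is_ideal X -> is_submod actS X.
Proof.
move=> iX; have [X0 [XD XM]] := iX; split => //; split => //; split.
  by move=> x; apply: ideal_neg.
by move=> a x; apply: XM.
Qed.

Lemma submodRR X : is_submod (fun a x : R => a * x) X <-> is_submod actR X.
Proof.
split=> -[X0 [XD [XN XM]]]; split => //; split => //; split => // a x Xx.
  by apply: XM.
by have [b <-] := Hsurj a; apply: (XM b).
Qed.

Lemma mm_ideal : is_ideal mm.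
Proof.
have [n0 [nD nM]] := n_ideal; split; first by exists 0; rewrite rmorph0.
split; first by move=> x y [a [na <-]] [b [nb <-]]; exists (a + b); rewrite rmorphD; auto.
move=> c y [a [na <-]]; have [b <-] := Hsurj c; exists (b * a); rewrite rmorphM; auto.
Qed.

Lemma mm_unit y : ~ mm y -> exists t, t * y = 1.
Proof.
move=> ny; have [x ex] := Hsurj y.
have nx : ~ n x by move=> nx; apply: ny; exists x.
have [t tx] := n_unit nx; exists (pi t); by rewrite -ex -rmorphM tx rmorph1.
Qed.

Lemma mm1 : ~ mm 1.
Proof.
move=> [x [nx px]]; case: Hloc => iN [n1 _]; apply: n1.
have : I (1 - x) by apply/Hker; rewrite rmorphB rmorph1 px subrr.
move/I_n => h; have -> : (1 : S) = (1 - x) + x by rewrite subrK.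
by case: iN => _ [D _]; apply: D.
Qed.

Lemma mp_img i y : mp i y <-> img (np i) y.
Proof. exact: ip_image. Qed.

Lemma mp_ideal i : is_ideal (mp i). Proof. exact: ip_ideal. Qed.
Lemma np_ideal i : is_ideal (np i). Proof. exact: ip_ideal. Qed.

Lemma nilN : exists N, psub (np N) I.
Proof.
have [r [g Hg]] := Hnoeth n_ideal.
case: Hprim => iI [_ [_ Hrad]].
apply: (nilpotent_n iI Hg) => x /Hrad; by [].
Qed.


Definition ext (T : Type) r (f : 'I_r -> T) (d : T) (j : nat) : T :=
  if insub j is Some i then f i else d.
Lemma ext_ord T r (f : 'I_r -> T) d (i : 'I_r) : ext f d i = f i.
Proof. by rewrite /ext valK. Qed.

Lemma bnd_mp i : exists p, bnd actR (mp i.+1) (mp i) p.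
Proof.
have [r [g Hg]] := Hnoeth (np_ideal i).
have gn : forall j, np i (ext g 0 j).
  move=> j; rewrite /ext; case: insub => [k|]; last by case: (np_ideal i).
  apply/Hg; exists (fun l => if l == k then 1 else 0).
  rewrite (bigD1 k) //= eqxx mul1r big1 ?addr0 // => l /negbTE ->; by rewrite mul0r.
pose G := fun j => pi (ext g 0 j).
exists r; apply: (bnd_ext (A:=mp i.+1) (B:=span actR (mp i.+1) G r)).
- by move=> x; split.
- move=> y; split.
    move=> [b [a [Bb ->]]].
    have iI := mp_ideal i; apply: (proj1 (proj2 iI)).
      exact: ip_mono.
    apply: ideal_sum => // j; rewrite /actR; apply: (proj2 (proj2 iI)).
    by apply/mp_img; exists (ext g 0 j).
  move=> /mp_img [x [/Hg [a ->] <-]].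
  exists 0, (ext a 0); split; first by case: (mp_ideal i.+1).
  rewrite add0r rmorph_sum; apply: eq_bigr => j _.
  by rewrite /actR /G !ext_ord rmorphM.
apply: (span_bnd actR_D actR_Dl actR_M actR_1 n_unit).
  exact/submodR/mp_ideal.
move=> j a na; rewrite /actR /G -rmorphM; apply/mp_img.
by exists (a * ext g 0 j); split => //; apply: ip_prod => //; apply: gn.
Qed.

Lemma bnd_top j : exists p, bnd actR (mp j) (mp 0) p.
Proof.
elim: j => [|j [p Hp]]; first by exists 0%N; apply: bnd0.
have [q Hq] := bnd_mp j.
exists (q + p)%N; apply: (combine actR_D (submodR (mp_ideal j))) => //.
- by move=> x; apply: ip_mono.
- by move=> x _; apply: ip0.
- exact/submodR/mp_ideal.
Qed.

Lemma sum_L j : mlength actR (mp 0) (mp j) = (\sum_(i < j) LL i)%N.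
Proof.
elim: j => [|j IH].
  rewrite big_ord0; have [_ _] := mlen_spec (submodR (mp_ideal 0)) (submodR (mp_ideal 0))
    (fun x h => h) (bnd0 (act:=actR) (fun x h => h : mp 0 x)).
  by rewrite leqn0 => /eqP.
have [q Hq] := bnd_mp j; have [p Hp] := bnd_top j.
rewrite big_ord_recr /= -IH addnC.
apply: (mlen_add actR_D (submodR (mp_ideal _)) (submodR (mp_ideal _)) (submodR (mp_ideal _)) _ _ Hq Hp).
- by move=> x; apply: ip_mono.
- by move=> x _; apply: ip0.
Qed.

Lemma step_up (A : comNzRingType) (J : A -> Prop) j : is_ideal J ->
  psub (idealpow J j) (idealpow J j.+1) -> psub (idealpow J j.+1) (idealpow J j.+2).
Proof.
move=> iJ H x; apply: ip_ind; first exact: ip_ideal.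
by move=> u w Ju /H Hw; apply: ip_prod.
Qed.

Lemma step_up_all (A : comNzRingType) (J : A -> Prop) j : is_ideal J ->
  psub (idealpow J j) (idealpow J j.+1) -> forall k, (j <= k)%N -> psub (idealpow J j) (idealpow J k).
Proof.
move=> iJ H k; elim: k => [|k IH]; first by rewrite leqn0 => /eqP ->.
rewrite leq_eqVlt => /orP [/eqP <- //|lt] x /(IH lt).
have : psub (idealpow J k) (idealpow J k.+1).
  have : forall d, psub (idealpow J (j + d)) (idealpow J (j + d).+1).
    elim=> [|d IHd]; first by rewrite addn0.
    by rewrite addnS; apply: step_up.
  by move/(_ (k - j)%N); rewrite subnKC.
by apply.
Qed.

Definition ss := socdeg mm.

Lemma mN0 : exists N, forall x, mp N x -> x = 0.
Proof.
have [N HN] := nilN; exists N => x /mp_img [y [ny <-]]; apply/Hker; exact: HN.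
Qed.

Lemma ss_spec : (exists x, mp ss x /\ x <> 0) /\ forall x, mp ss.+1 x -> x = 0.
Proof.
have [N HN] := mN0.
have ex : exists l, (exists x, mp l x /\ x <> 0) /\ forall k, (exists x, mp k x /\ x <> 0) -> (k <= l)%N.
  apply: (natmax_ex (k0:=0%N) (B:=N)).
    by exists 1; split; [apply: ip0|apply/eqP; exact: oner_neq0].
  move=> k [x [hx nx]]; rewrite leqNgt; apply/negP => lt; apply: nx; apply: HN.
  exact: ip_mono_le (ltnW lt) hx.
have [h1 h2] := natmax_spec ex; split => // x hx; apply: NNPP => nx.
by have := h2 ss.+1 (ex_intro _ x (conj hx nx)); rewrite ltnn.
Qed.

Lemma mp_strict i : (i <= ss)%N -> exists y, mp i y /\ ~ mp i.+1 y.
Proof.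
move=> le; apply: NNPP => N.
have H : psub (mp i) (mp i.+1).
  by move=> y hy; apply: NNPP => ny; apply: N; exists y.
have [[x [hx nx]] h0] := ss_spec.
have := step_up_all mm_ideal H (leqW le) (ip_mono_le le hx).
by move/h0.
Qed.

Lemma LL_ge1 i : (i <= ss)%N -> (1 <= LL i)%N.
Proof.
move=> le; have [y [hy ny]] := mp_strict le.
have [p Hp] := bnd_mp i.
have [_ H _] := mlen_spec (submodR (mp_ideal _)) (submodR (mp_ideal _)) (fun x => @ip_mono _ _ _ x) Hp.
apply: H; apply: chain1 hy ny; [exact/submodR/mp_ideal|exact/submodR/mp_ideal|exact: ip_mono].
Qed.

Lemma LL_0 i : (ss < i)%N -> LL i = 0%N.
Proof.
move=> lt; have [_ h0] := ss_spec.
have sub : psub (mp i) (mp i.+1).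
  move=> x hx; have -> : x = 0 by apply: h0; exact: ip_mono_le lt hx.
  by case: (mp_ideal i.+1).
have [_ _] := mlen_spec (submodR (mp_ideal _)) (submodR (mp_ideal _)) (fun x => @ip_mono _ _ _ x) (bnd0 (act:=actR) sub).
by rewrite leqn0 => /eqP.
Qed.

Lemma lenR_sum : mlength actR (fun _ => True) (fun y => y = 0) = (\sum_(i < ss.+1) LL i)%N.
Proof.
rewrite -sum_L; apply: mlength_ext => x; first by split => // _; apply: ip0.
have [_ h0] := ss_spec; split; last exact: h0.
by move=> ->; case: (mp_ideal ss.+1).
Qed.


Lemma img_submod X : is_submod actS X -> is_submod actR (img X).
Proof.
move=> [X0 [XD [XN XM]]]; split; first by exists 0; rewrite rmorph0.
split; first by move=> x y [a [Xa <-]] [b [Xb <-]]; exists (a + b); rewrite rmorphD; auto.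
split; first by move=> x [a [Xa <-]]; exists (- a); rewrite rmorphN; auto.
by move=> c x [a [Xa <-]]; exists (c * a); rewrite /actR rmorphM; split => //; apply: XM.
Qed.

Lemma pre_submod Y : is_submod actR Y -> is_submod actS (fun x => Y (pi x)).
Proof.
move=> [Y0 [YD [YN YM]]]; split; first by rewrite rmorph0.
split; first by move=> x y hx hy; rewrite rmorphD; auto.
split; first by move=> x hx; rewrite rmorphN; auto.
by move=> c x hx; rewrite /actS rmorphM; apply: YM.
Qed.

Lemma img_pre X : is_submod actS X -> psub I X -> forall x, img X (pi x) <-> X x.
Proof.
move=> [X0 [XD [XN XM]]] IX x; split; last by move=> Xx; exists x.
move=> [x' [Xx' e]]; have Ix : I (x - x') by apply/Hker; rewrite rmorphB e subrr.
have -> : x = (x - x') + x' by rewrite subrK.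
by apply: XD => //; apply: IX.
Qed.

Lemma corr K J : is_submod actS K -> is_submod actS J -> psub I K -> psub K J ->
  mlength actS J K = mlength actR (img J) (img K).
Proof.
move=> sK sJ IK KJ; apply: natmax_ext => l; split.
  move=> [c sc]; have [[G _] _] := subchain_good sc.
  have [c0 [cl [cs cst]]] := sc.
  exists (fun k => img (c k)); split.
    by move=> y; split => -[x [hx <-]]; exists x; split => //; apply/c0.
  split; first by move=> y; split => -[x [hx <-]]; exists x; split => //; apply/cl.
  split; first by move=> i le; apply: img_submod; apply: cs.
  move=> i lt; have [h1 [x [h2 h3]]] := cst i lt; split.
    by move=> y [z [hz <-]]; exists z; split => //; apply: h1.
  exists (pi x); split; first by exists x.
  have [si [Ki _]] := G i (ltnW lt).
  by move/(img_pre si (fun z hz => Ki _ (IK _ hz))).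
move=> [d [d0 [dl [ds dst]]]].
exists (fun k x => d k (pi x)); split.
  by move=> x; rewrite d0; apply: img_pre.
split; first by move=> x; rewrite dl; apply: img_pre => // z /IK /KJ.
split; first by move=> i le; apply: pre_submod; apply: ds.
move=> i lt; have [h1 [y [h2 h3]]] := dst i lt; split; first by move=> x /h1.
by have [x ex] := Hsurj y; exists x; rewrite ex.
Qed.

Lemma LL_hilb i : psub I (np i.+1) -> LL i = hilb n i.
Proof.
move=> Isub; rewrite /hilb /LL (@mlength_ext _ _ actR _ _ (img (np i)) (img (np i.+1))); last first.
- exact: mp_img.
- exact: mp_img.
rewrite -corr //.
- exact/submodS/np_ideal.
- exact/submodS/np_ideal.
- by move=> x; apply: ip_mono.
Qed.

Lemma hilbm_LL i : hilb mm i = LL i.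
Proof. rewrite /hilb /LL; apply: mlength_act => X; exact: submodRR. Qed.


Definition vv := vS n I.

Lemma nI_ss : psub (np ss.+1) I.
Proof.
move=> x hx; apply/Hker; have [_ h0] := ss_spec; apply: h0; apply/mp_img; by exists x.
Qed.

Lemma vv_cases : (psub I (np vv) /\ forall k, psub I (np k) -> (k <= vv)%N) \/
                 (vv = 0%N /\ forall k, psub I (np k)).
Proof.
case: (classic (exists l, psub I (np l) /\ forall k, psub I (np k) -> (k <= l)%N)) => [ex|nex].
  by left; apply: natmax_spec ex.
right; split.
  by rewrite /vv /vS /natmax; case: excluded_middle_informative.
move=> k; apply: NNPP => nk; apply: nex.
apply: (natmax_ex (k0:=0%N) (B:=k)); first by move=> x _; apply: ip0.
move=> j hj; rewrite leqNgt; apply/negP => lt; apply: nk => x /hj.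
exact: ip_mono_le (ltnW lt).
Qed.

Lemma vv_le : (vv <= ss.+1)%N.
Proof.
case: vv_cases => [[Iv Hv]|[-> _]] //.
rewrite leqNgt; apply/negP => lt.
have H : psub (np ss.+1) (np ss.+2).
  by move=> x /nI_ss /Iv; apply: ip_mono_le.
suff: psub I (np vv.+1) by move/Hv; rewrite ltnn.
move=> x /Iv hx.
apply: (step_up_all n_ideal H (k:=vv.+1)); first by apply: leqW; apply: ltnW.
exact: (ip_mono_le (ltnW lt) hx).
Qed.

Lemma sumL_hilb : (\sum_(i < vv) LL i = \sum_(i < vv) hilb n i)%N.
Proof.
case: vv_cases => [[Iv _]|[-> _]]; last by rewrite !big_ord0.
apply: eq_bigr => i _; apply: LL_hilb => x /Iv; apply: ip_mono_le; exact: ltn_ord.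
Qed.

Lemma lenR_split : mlength actR (fun _ => True) (fun y => y = 0) =
  (\sum_(i < vv) hilb n i + \sum_(vv <= i < ss.+1) LL i)%N.
Proof.
rewrite lenR_sum -sumL_hilb -!(big_mkord xpredT) (big_cat_nat (n:=vv)) //; exact: vv_le.
Qed.

Lemma tail_ge : (ss.+1 - vv <= \sum_(vv <= i < ss.+1) LL i)%N.
Proof.
rewrite -[X in (X <= _)%N]muln1; apply: sum_ge_nat => i /andP [_ lt].
by apply: LL_ge1.
Qed.

Lemma tail_eq : (\sum_(vv <= i < ss.+1) LL i = ss.+1 - vv)%N <->
  forall i, (vv <= i <= ss)%N -> LL i = 1%N.
Proof.
split; last first.
  move=> H; rewrite -[X in _ = X]muln1 -sum_nat_const_nat; apply: eq_big_nat => i /andP [a b].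
  by apply: H; rewrite a.
move=> E i /andP [a b]; apply/eqP; rewrite eqn_leq LL_ge1 // andbT.
rewrite leqNgt; apply/negP => lt2; move: E.
have iv : (vv <= i <= ss.+1)%N by rewrite a leqW.
rewrite (@big_cat_nat _ _ _ i vv ss.+1 xpredT LL a (leqW b)) /= (@big_ltn _ _ _ i ss.+1 LL); last by rewrite ltnS.
have h1 : (i - vv <= \sum_(vv <= j < i) LL j)%N.
  rewrite -[X in (X <= _)%N]muln1; apply: sum_ge_nat => j /andP [_ lt].
  by apply: LL_ge1; apply: leq_trans (ltnW lt) b.
have h2 : (ss.+1 - i.+1 <= \sum_(i.+1 <= j < ss.+1) LL j)%N.
  rewrite -[X in (X <= _)%N]muln1; apply: sum_ge_nat => j /andP [_ lt].
  by apply: LL_ge1.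
lia.
Qed.

Lemma part1 : ((ss : int) <= (mlength actR (fun _ => True) (fun y => y = 0) : int)
   - ((\sum_(i < vv) hilb n i)%N : int) + (vv : int) - 1)%R.
Proof.
rewrite lenR_split; have := tail_ge; have := vv_le.
set T := (\sum_(_ <= _ < _) _)%N; set H := (\sum_(_ < _) _)%N; lia.
Qed.


Lemma mu1_le (i : nat) : mu (mp vv) = 1%N -> (0 < vv)%N -> (vv <= i)%N -> (LL i <= 1)%N.
Proof.
move=> H v0 le.
have P1 := natmin_pos (P := fun k => exists g : 'I_k -> R, forall x, mp vv x <-> exists a : 'I_k -> R, x = \sum_(i < k) a i * g i).
rewrite /mu in H; rewrite H in P1; have [g Hg] : exists g : 'I_1 -> R, forall x, mp vv x <-> exists a : 'I_1 -> R, x = \sum_(i < 1) a i * g i by apply: P1.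
have Hg' : forall y, idealpow mm vv y <-> exists a, y = a * g ord0.
  move=> y; split; first by move/Hg => [a ->]; exists (a ord0); rewrite big_ord1.
  by move=> [a ->]; apply/Hg; exists (fun _ => a); rewrite big_ord1.
have [x Hx] := principal_powers mm_ideal mm_unit mm1 v0 Hg' (i - vv).
rewrite subnKC // in Hx.
have xi : mp i x by apply/Hx; exists 1; rewrite mul1r.
have Hb : bnd actR (mp i.+1) (mp i) 1.
  apply: (bnd_ext (A := mp i.+1) (B := fun y => exists b a, mp i.+1 b /\ y = b + actR a x)).
  - by move=> y; split.
  - move=> y; split.
      move=> [b [a [hb ->]]]; have [_ [D M]] := mp_ideal i; apply: D; first exact: ip_mono.
      exact: M.
    move/Hx => [a ->]; have [c <-] := Hsurj a; exists 0, c; split; first by case: (mp_ideal i.+1).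
    by rewrite add0r.
  apply: (two_elem actR_M actR_1 n_unit); first exact/submodR/mp_ideal.
  move=> s ns; rewrite /actR; apply: ip_prod => //; by exists s.
have [_ _] := mlen_spec (submodR (mp_ideal _)) (submodR (mp_ideal _)) (fun x => @ip_mono _ _ _ x) Hb.
by [].
Qed.

Definition Kt (x0 : R) t := fun y => exists r z, mp t z /\ y = r * x0 + z.

Lemma Kt_ideal x0 t : is_ideal (Kt x0 t).
Proof.
have [Z [D M]] := mp_ideal t.
split; first by exists 0, 0; rewrite mul0r addr0.
split.
  move=> x y [r [z [hz ->]]] [r' [z' [hz' ->]]]; exists (r + r'), (z + z'); split; first exact: D.
  by rewrite mulrDl addrACA.
move=> a x [r [z [hz ->]]]; exists (a * r), (a * z); split; first exact: M.
by rewrite mulrDr mulrA.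
Qed.

Lemma Q_mu1 : (vv <= ss)%N -> LL vv = 1%N -> mu (mp vv) = 1%N.
Proof.
move=> le L1; have [x0 [h0 n0]] := mp_strict le.
have sub1 : psub (mp vv) (Kt x0 vv.+1).
  move=> y hy; apply: NNPP => ny.
  have [p Hp] := bnd_mp vv.
  have [_ H _] := mlen_spec (submodR (mp_ideal _)) (submodR (mp_ideal _)) (fun x => @ip_mono _ _ _ x) Hp.
  have := H _ 2 (chain2 (submodR (mp_ideal _)) (submodR (Kt_ideal x0 vv.+1)) (submodR (mp_ideal vv)) _ _ _ n0 hy ny).
  rewrite -/(LL vv) L1 => /(_ _ _ _) h.
  suff : (2 <= 1)%N by [].
  apply: h.
  - by move=> z hz; exists 0, z; rewrite mul0r add0r.
  - move=> z [r [z' [hz' ->]]]; have [_ [D M]] := mp_ideal vv; apply: D; [exact: M|exact: ip_mono].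
  - by exists 1, 0; rewrite mul1r addr0; split => //; case: (mp_ideal vv.+1).
have D : forall j, psub (mp (vv + j)) (Kt x0 (vv + j).+1).
  elim=> [|j IH]; first by rewrite addn0.
  rewrite addnS => y; apply: (ip_ind (Kt_ideal x0 _)) => u w Ju /IH [r [z [hz ->]]].
  exists (u * r), (u * z); split; first exact: ip_prod.
  by rewrite mulrDr mulrA.
have C : forall j, psub (mp vv) (Kt x0 (vv + j)).
  elim=> [|j IH]; first by rewrite addn0 => y hy; exists 0, y; rewrite mul0r add0r.
  move=> y /IH [r [z [hz ->]]]; have [r' [z' [hz' ->]]] := D j z hz.
  by exists (r + r'), z'; rewrite addnS; split => //; rewrite addrA mulrDl.
have Hx : forall y, mp vv y <-> exists r, y = r * x0.
  move=> y; split.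
    move/(C (ss.+1 - vv)%N); rewrite subnKC; last exact: leqW.
    move=> [r [z [hz ->]]]; have [_ h00] := ss_spec; rewrite (h00 _ hz) addr0; by exists r.
  by move=> [r ->]; have [_ [_ M]] := mp_ideal vv; exact: M.
rewrite /mu; apply: natmin_eq.
  exists (fun _ => x0) => y; rewrite Hx; split => -[r ->].
    by exists (fun _ => r); rewrite big_ord1.
  by exists (r ord0); rewrite big_ord1.
case=> // [[g Hg]]; exfalso; apply: n0.
have := proj1 (Hg x0) h0; move=> [a ->]; rewrite big_ord0; by case: (mp_ideal vv.+1).
Qed.


Lemma final :
  let lenR := mlength (fun (a : S) (y : R) => pi a * y) (fun _ => True) (fun y => y = 0) in
  let eqn := ((ss%:Z) = lenR%:Z - (\sum_(i < vv) hilb n i)%:Z + vv%:Z - 1) in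
  (ss%:Z <= lenR%:Z - (\sum_(i < vv) hilb n i)%:Z + vv%:Z - 1) /\
  (~ (exists t, forall x, I x <-> idealpow n t x) ->
     (eqn <-> mu (idealpow mm vv) = 1%N) /\
     (mu (idealpow mm vv) = 1%N <->
        forall i, ((i < vv)%N -> hilb mm i = hilb n i) /\
                  ((vv <= i <= ss)%N -> hilb mm i = 1%N) /\
                  ((ss < i)%N -> hilb mm i = 0%N))).
Proof.
move=> lenR eqn; split; first exact: part1.
move=> notpow.
have [Iv Hv] : psub I (np vv) /\ forall k, psub I (np k) -> (k <= vv)%N.
  case: vv_cases => // -[_ all]; exfalso; apply: notpow.
  have [N HN] := nilN; exists N => x; split; [exact: all|exact: HN].
have v1 : (0 < vv)%N by apply: Hv => x /I_n; apply: ip1 n_ideal.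
have vs : (vv <= ss)%N.
  have := vv_le; rewrite leq_eqVlt => /orP [/eqP e|]; last by rewrite ltnS.
  exfalso; apply: notpow; exists ss.+1 => x; split; first by move/Iv; rewrite e.
  exact: nI_ss.
pose Q := forall i, (vv <= i <= ss)%N -> LL i = 1%N.
have QE : eqn <-> Q.
  rewrite /eqn /lenR -/actR lenR_split /Q -tail_eq.
  have := vv_le; set T := (\sum_(_ <= _ < _) _)%N; set H := (\sum_(_ < _) _)%N.
  move=> h; split; lia.
have QM : mu (idealpow mm vv) = 1%N <-> Q.
  split.
    move=> hm i /andP [a b]; apply/eqP; rewrite eqn_leq LL_ge1 // andbT.
    exact: mu1_le.
  by move=> hq; apply: Q_mu1 => //; apply: hq; rewrite leqnn vs.
have QC : Q <-> forall i, ((i < vv)%N -> hilb mm i = hilb n i) /\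
                  ((vv <= i <= ss)%N -> hilb mm i = 1%N) /\
                  ((ss < i)%N -> hilb mm i = 0%N).
  split.
    move=> hq i; rewrite !hilbm_LL; split.
      move=> lt; apply: LL_hilb => x /Iv; exact: ip_mono_le.
    by split; [apply: hq|apply: LL_0].
  by move=> h i hi; rewrite -hilbm_LL; apply: (proj1 (proj2 (h i))).
split; [rewrite QE QM|rewrite QM QC]; by [].
Qed.

End Main.


Theorem theorem3p3 (S R : comNzRingType) (n I : S -> Prop) (pi : {rmorphism S -> R}) :
  noetherian S -> is_local n -> primary_to I n ->
  (* R = S/I : pi is surjective with kernel I *)
  (forall y : R, exists x, pi x = y) -> (forall x, pi x = 0 <-> I x) ->
  let m : R -> Prop := fun y => exists x, n x /\ pi x = y in
  let v := vS n I in
  let s := socdeg m in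
  let lenR := mlength (fun (a : S) (y : R) => pi a * y) (fun _ => True) (fun y => y = 0) in
  let eqn := (s%:Z = lenR%:Z - (\sum_(i < v) hilb n i)%:Z + v%:Z - 1) in
  (s%:Z <= lenR%:Z - (\sum_(i < v) hilb n i)%:Z + v%:Z - 1) /\
  (~ (exists t, forall x, I x <-> idealpow n t x) ->
     (eqn <-> mu (idealpow m v) = 1%N) /\
     (mu (idealpow m v) = 1%N <->
        forall i, ((i < v)%N -> hilb m i = hilb n i) /\
                  ((v <= i <= s)%N -> hilb m i = 1%N) /\
                  ((s < i)%N -> hilb m i = 0%N))).
Proof.
move=> Hn Hl Hp Hs Hk.
exact: (final Hn Hl Hp Hs Hk).
Qed.
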